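(* Let $M$ be an $n\times d$ matrix (a database). For every nonempty subset of columns $J\subseteq[d]$, every family of thresholds $\{t_j\}_{j\in J}\subseteq(0,1]$, and every $c\in(0,1)$, \[ Q_J\Big(c\prod_{j\in J} t_j\Big)\;\le\;\sum_{j\in J} Q_j(t_j)\;+\;c . \]
   Context: $M$ has $n$ rows (users) and $d$ columns (features); $M_{ij}$ is the value of feature $j$ for user $i$. For a column $j$, $V_j=\{M_{ij}: i\in[n]\}$, and for $J\subseteq[d]$, $V_J=\prod_{j\in J}V_j$. The empirical joint distribution of the columns $J$ is $p_J(v)=\frac{1}{n}\,|\{i\in[n]: M_{ij}=v_j \text{ for all } j\in J\}|$ for $v\in V_J$. The exposure of columns $J$ at threshold $t$ is \[ Q_J(t)=\sum_{v\in V_J} p_J(v)\,\mathbf 1[p_J(v)<t]. \] For a single column $j$, $Q_j:=Q_{\{j\}}$. *)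

(* Defs.v *)
From HB Require Import structures.
From mathcomp Require Import all_boot all_order all_algebra.
Set Implicit Arguments. Unset Strict Implicit. Unset Printing Implicit Defensive.
Import Order.TTheory GRing.Theory Num.Theory.
Local Open Scope ring_scope.

Section Exposure.
Variables (R : realFieldType) (T : eqType) (n d : nat) (M : 'M[T]_(n, d)).

Definition Vcol (j : 'I_d) : seq T := undup [seq M i j | i <- enum 'I_n].

(* V_J = prod_{j in J} V_j ; an element v is the list (v_j)_{j in J}, listed
   along the increasing enumeration of J. *)
Definition VJ (J : {set 'I_d}) : seq (seq T) :=
  foldr (fun j acc => [seq x :: s | x <- Vcol j, s <- acc]) [:: [::]] (enum J).

Definition rowJ (J : {set 'I_d}) (i : 'I_n) : seq T := [seq M i j | j <- enum J].

Definition pJ (J : {set 'I_d}) (v : seq T) : R :=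
  (#|[set i : 'I_n | rowJ J i == v]|)%:R / n%:R.

Definition QJ (J : {set 'I_d}) (t : R) : R :=
  \sum_(v <- VJ J) pJ J v * ((pJ J v < t)%R : bool)%:R.

Definition Qj (j : 'I_d) (t : R) : R := QJ [set j] t.

End Exposure.

(* Main.v *)
Require Import Defs.
From HB Require Import structures.
From mathcomp Require Import all_boot all_order all_algebra.
From mathcomp Require Import ring.
Import Order.TTheory GRing.Theory Num.Theory.
Local Open Scope ring_scope.

Definition prodL {T : eqType} {d : nat} (S : 'I_d -> seq T) (l : seq 'I_d) : seq (seq T) :=
  foldr (fun j acc => [seq x :: s | x <- S j, s <- acc]) [:: [::]] l.

Lemma prodL_uniq (T : eqType) (d : nat) (S : 'I_d -> seq T) (l : seq 'I_d) :
  (forall j, uniq (S j)) -> uniq (prodL S l).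
Proof.
move=> Su; elim: l => [|j l IH] //=.
apply: allpairs_uniq => //.
by move=> [x s] [y r] _ _ /= [-> ->].
Qed.

Lemma prodL_mem (T : eqType) (d : nat) (S : 'I_d -> seq T) (l : seq 'I_d) (f : 'I_d -> T) :
  (forall j, j \in l -> f j \in S j) -> [seq f j | j <- l] \in prodL S l.
Proof.
elim: l => [|j l IH] Hf //=.
apply: allpairs_f; first by apply: Hf; rewrite inE eqxx.
by apply: IH => k Hk; apply: Hf; rewrite inE Hk orbT.
Qed.

Lemma size_prodL (T : eqType) (d : nat) (S : 'I_d -> seq T) (l : seq 'I_d) :
  size (prodL S l) = (\prod_(j <- l) size (S j))%N.
Proof.
elim: l => [|j l IH]; first by rewrite big_nil.
by rewrite big_cons /= size_allpairs IH.
Qed.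

Lemma card_sum (R : realFieldType) n (P : pred 'I_n) :
  (#|[set i | P i]|)%:R = \sum_i (P i)%:R :> R.
Proof.
rewrite -sum1_card natr_sum big_mkcond /=.
by apply: eq_bigr => i _; rewrite inE; case: (P i).
Qed.

Lemma key (R : realFieldType) n (K : eqType) (g : 'I_n -> K) (s : seq K) (F : K -> R) :
  uniq s -> (forall i, g i \in s) ->
  \sum_(v <- s) (#|[set i | g i == v]|)%:R * F v = \sum_i F (g i).
Proof.
move=> us gs.
under eq_bigr do rewrite card_sum mulr_suml.
rewrite exchange_big /=; apply: eq_bigr => i _.
rewrite (bigD1_seq (g i)) //= eqxx mul1r big1 ?addr0 // => v.
by rewrite eq_sym => /negbTE ->; rewrite mul0r.
Qed.

Lemma Vcol_mem (T : eqType) n d (M : 'M[T]_(n, d)) i j : M i j \in Vcol M j.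
Proof. by rewrite /Vcol mem_undup; apply: map_f; rewrite mem_enum. Qed.

Lemma QJ_rows (R : realFieldType) (T : eqType) n d (M : 'M[T]_(n, d)) J (tau : R) :
  QJ M J tau = \sum_i ((pJ R M J (rowJ M J i) < tau)%R : bool)%:R / n%:R.
Proof.
rewrite /QJ.
have -> : \sum_(v <- VJ M J) pJ R M J v * ((pJ R M J v < tau)%R : bool)%:R =
  \sum_(v <- VJ M J) (#|[set i | rowJ M J i == v]|)%:R * (((pJ R M J v < tau)%R : bool)%:R / n%:R).
  by apply: eq_bigr => v _; rewrite /pJ mulrAC mulrA.
rewrite key //.
- by apply: prodL_uniq => j; apply: undup_uniq.
- by move=> i; apply: (@prodL_mem _ _ _ _ (fun j => M i j)) => j _; apply: Vcol_mem.
Qed.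

Lemma pj_eq (R : realFieldType) (T : eqType) n d (M : 'M[T]_(n, d)) j x :
  pJ R M [set j] [:: x] = (#|[set i | M i j == x]|)%:R / n%:R :> R.
Proof.
rewrite /pJ; congr (_%:R / _); apply: eq_card => i; rewrite !inE /rowJ enum_set1 /=.
by rewrite eqseq_cons andbT.
Qed.

Lemma rowJ1 (T : eqType) n d (M : 'M[T]_(n, d)) j i : rowJ M [set j] i = [:: M i j].
Proof. by rewrite /rowJ enum_set1. Qed.

Lemma sumS_le1 (R : realFieldType) (T : eqType) n d (M : 'M[T]_(n, d)) j (tj : R) :
  0 <= tj ->
  0 <= (size [seq x <- Vcol M j | (tj <= pJ R M [set j] [:: x])%R])%:R * tj <= 1.
Proof.
move=> t0; apply/andP; split; first by rewrite mulr_ge0.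
set P := (fun x => (tj <= pJ R M [set j] [:: x])%R).
have pj0 : forall x, 0 <= pJ R M [set j] [:: x] by move=> x; rewrite divr_ge0.
apply: (@le_trans _ _ (\sum_(x <- Vcol M j) pJ R M [set j] [:: x])).
  apply: (@le_trans _ _ (\sum_(x <- Vcol M j | P x) pJ R M [set j] [:: x])).
    rewrite -big_filter mulr_natl -iter_addr_0 -[X in iter X _ _]count_predT -big_const_seq.
    rewrite !big_seq; apply: ler_sum => x.
    by rewrite mem_filter => /andP[].
  by rewrite [X in _ <= X](bigID P) /= lerDl sumr_ge0.
have -> : \sum_(x <- Vcol M j) pJ R M [set j] [:: x] =
  \sum_(x <- Vcol M j) (#|[set i | M i j == x]|)%:R * (n%:R^-1 : R).
  by apply: eq_bigr => x _; rewrite pj_eq.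
rewrite (@key R n T (fun i => M i j)) ?undup_uniq //; last by move=> i; apply: Vcol_mem.
rewrite sumr_const card_ord.
case: (posnP n) => [->|n0]; first by rewrite mulr0n.
by rewrite -(mulr_natl (n%:R^-1)) divff // pnatr_eq0 -lt0n.
Qed.

Theorem theorem2 (R : realFieldType) (T : eqType) (n d : nat) (M : 'M[T]_(n, d))
    (J : {set 'I_d}) (t : 'I_d -> R) (c : R) :
  J != set0 ->
  (forall j, j \in J -> 0 < t j <= 1) ->
  0 < c < 1 ->
  QJ M J (c * \prod_(j in J) t j) <= \sum_(j in J) Qj M j (t j) + c.
Proof.
move=> _ ht /andP[c0 _].
set tau := c * \prod_(j in J) t j.
have tau0 : 0 <= tau.
  by apply: mulr_ge0; [apply: ltW|apply: prodr_ge0 => j /ht /andP[/ltW]].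
pose a i := (pJ R M J (rowJ M J i) < tau)%R.
pose b i j := (pJ R M [set j] [:: M i j] < t j)%R.
pose gd i := a i && [forall j in J, ~~ b i j].
have hQj : forall j, Qj M j (t j) = \sum_i (b i j)%:R / n%:R.
  by move=> j; rewrite /Qj QJ_rows; apply: eq_bigr => i _; rewrite rowJ1.
rewrite QJ_rows.
under [X in _ <= X + _]eq_bigr do rewrite hQj -mulr_suml.
rewrite -mulr_suml.
have claim1 : forall i, (a i)%:R <= \sum_(j in J) (b i j)%:R + (gd i)%:R :> R.
  move=> i; rewrite /gd; case: (boolP [forall j in J, ~~ b i j]) => H.
    by rewrite andbT lerDr sumr_ge0.
  move/forall_inPn: H => [j0 Hj0 /negPn Hb].
  rewrite (bigD1 j0) //= Hb -addrA.
  apply: (@le_trans _ _ 1); first by case: (a i).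
  by rewrite lerDl addr_ge0 ?sumr_ge0.
pose S j := [seq x <- Vcol M j | (t j <= pJ R M [set j] [:: x])%R].
pose P := prodL S (enum J).
have claim2 : \sum_i (gd i)%:R <= c * n%:R :> R.
  have -> : \sum_i (gd i)%:R = \sum_(v <- P) \sum_i (rowJ M J i == v)%:R * (gd i)%:R :> R.
    rewrite exchange_big /=; apply: eq_bigr => i _.
    case Hg: (gd i); last by rewrite big1 // => v _; rewrite mulr0.
    have HP : rowJ M J i \in P.
      apply: (@prodL_mem _ _ _ _ (fun j => M i j)) => j; rewrite mem_enum => Hj.
      rewrite mem_filter Vcol_mem andbT leNgt.
      by move: Hg; rewrite /gd => /andP[_ /forall_inP /(_ j Hj)].
    rewrite (bigD1_seq (rowJ M J i)) //=; last by apply: prodL_uniq => j; apply: filter_uniq; apply: undup_uniq.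
    rewrite eqxx mul1r big1 ?addr0 // => v.
    by rewrite eq_sym => /negbTE ->; rewrite mul0r.
  apply: (@le_trans _ _ (\sum_(v <- P) tau * n%:R)).
    apply: ler_sum => v _.
    case: (boolP [exists i, (rowJ M J i == v) && gd i]) => H.
      move/existsP: H => [i0 /andP[/eqP Hv Hg0]].
      apply: (@le_trans _ _ (\sum_i (rowJ M J i == v)%:R)).
        by apply: ler_sum => i _; case: (rowJ M J i == v); case: (gd i); rewrite ?mulr1 ?mulr0.
      have n0 : (0 < n)%N by apply: (leq_ltn_trans (leq0n i0)).
      rewrite -card_sum.
      have -> : (#|[set i | rowJ M J i == v]|)%:R = pJ R M J v * n%:R.
        by rewrite /pJ mulfVK // pnatr_eq0 -lt0n.
      rewrite ler_pM2r ?ltr0n // -Hv ltW //.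
      by move: Hg0; rewrite /gd => /andP[].
    rewrite big1; first by rewrite mulr_ge0 ?ler0n.
    move=> i _.
    move: H; rewrite negb_exists => /forallP /(_ i).
    by case: (rowJ M J i == v); case: (gd i); rewrite ?mulr0 ?mul0r.
  rewrite big_const_seq count_predT iter_addr_0 -(mulr_natl (tau * n%:R)) size_prodL natr_prod.
  rewrite big_enum /= /tau.
  have -> : \prod_(i in J) (size (S i))%:R * (c * \prod_(j in J) t j * n%:R) =
     (c * n%:R) * \prod_(j in J) ((size (S j))%:R * t j) :> R.
    rewrite big_split /=.
    set A := \prod_(i in J) _; set B := \prod_(i in J) _.
    ring.
  apply: ler_piMr; first by apply: mulr_ge0; [apply: ltW|apply: ler0n].
  apply: prodr_ile1 => j Hj.
  apply: sumS_le1.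
  by case/andP: (ht j Hj) => /ltW.
have H1 : \sum_i (a i)%:R <= \sum_(j in J) \sum_i (b i j)%:R + \sum_i (gd i)%:R :> R.
  rewrite exchange_big -big_split /=; apply: ler_sum => i _; exact: claim1.
apply: (@le_trans _ _ ((\sum_(j in J) \sum_i (b i j)%:R + \sum_i (gd i)%:R) / n%:R)).
  by rewrite ler_wpM2r // invr_ge0 ler0n.
rewrite mulrDl mulr_suml lerD2l.
case: (posnP n) => [n0|n0].
  have -> : (n%:R : R) = 0 by rewrite n0.
  by rewrite invr0 mulr0 ltW.
by rewrite ler_pdivrMr ?ltr0n // mulrC.
Qed.
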